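(* For $a\in\mathbb{Q}$ let $\mathcal{R}_a$ be the rectangle with vertices $P_1=(0,0)$, $P_2=(0,1)$, $P_3=(a,0)$, $P_4=(a,1)$. Then the set of $a\in\mathbb{Q}$ for which there are infinitely many points $(x,y)\in\mathbb{Q}^2$ whose Euclidean distances to each of $P_1,P_2,P_3,P_4$ are rational numbers is dense in $\mathbb{R}$.
   Context: No further context is needed. *)

(* Defs.v *)
From Stdlib Require Import Reals QArith Qreals List.
Open Scope R_scope.

Definition is_rational (r : R) : Prop := exists q : Q, Q2R q = r.

Definition eucl_dist (p q : R * R) : R :=
  sqrt ((fst p - fst q) ^ 2 + (snd p - snd q) ^ 2).

Definition P1 (a : Q) : R * R := (0, 0).
Definition P2 (a : Q) : R * R := (0, 1).
Definition P3 (a : Q) : R * R := (Q2R a, 0).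
Definition P4 (a : Q) : R * R := (Q2R a, 1).

Definition good_point (a : Q) (p : R * R) : Prop :=
  is_rational (fst p) /\ is_rational (snd p) /\
  is_rational (eucl_dist p (P1 a)) /\ is_rational (eucl_dist p (P2 a)) /\
  is_rational (eucl_dist p (P3 a)) /\ is_rational (eucl_dist p (P4 a)).

Definition infinite_set (S : R * R -> Prop) : Prop :=
  forall l : list (R * R), exists p, S p /\ ~ In p l.

Definition good_a (a : Q) : Prop := infinite_set (good_point a).

(* Main.v *)
From Stdlib Require Import Classical_Prop.
Require Import Defs.
From Stdlib Require Import Reals QArith Qreals List Lra Lia ZArith Field.
Open Scope R_scope.

Definition frac (p q : Z) : R := IZR p / IZR q.
Definition Ir r := exists p q, Z.odd q = true /\ r = frac p q.
Definition Ur r := exists p q, Z.odd p = true /\ Z.odd q = true /\ r = frac p q.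
Definition Er r := exists p q, Z.odd p = false /\ Z.odd q = true /\ r = frac p q.

Lemma odd_nz q : Z.odd q = true -> IZR q <> 0.
Proof. intros H. apply not_0_IZR. intro; subst; discriminate. Qed.

Lemma frac_mul p1 q1 p2 q2: IZR q1 <> 0 -> IZR q2 <> 0 ->
  frac p1 q1 * frac p2 q2 = frac (p1*p2) (q1*q2).
Proof. intros. unfold frac. rewrite !mult_IZR. field. auto. Qed.
Lemma frac_add p1 q1 p2 q2: IZR q1 <> 0 -> IZR q2 <> 0 ->
  frac p1 q1 + frac p2 q2 = frac (p1*q2 + p2*q1) (q1*q2).
Proof. intros. unfold frac. rewrite plus_IZR, !mult_IZR. field. auto. Qed.
Lemma frac_opp p q : IZR q <> 0 -> - frac p q = frac (-p) q.
Proof. intros. unfold frac. rewrite opp_IZR. field. auto. Qed.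
Lemma frac_inv p q : IZR p <> 0 -> IZR q <> 0 -> / frac p q = frac q p.
Proof. intros. unfold frac. field. auto. Qed.

Ltac cls := repeat match goal with
  | H : exists _, _ |- _ => destruct H
  | H : _ /\ _ |- _ => destruct H end; subst.

Ltac par := repeat (rewrite ?Z.odd_mul, ?Z.odd_add, ?Z.odd_opp);
  repeat match goal with H : Z.odd _ = _ |- _ => rewrite H; clear H end; reflexivity.

Lemma U_mul a b : Ur a -> Ur b -> Ur (a*b).
Proof. unfold Ur; intros; cls. do 2 eexists. split; [|split]; [| |apply frac_mul; apply odd_nz; eauto]; par. Qed.
Lemma I_mul a b : Ir a -> Ir b -> Ir (a*b).
Proof. unfold Ir; intros; cls. do 2 eexists. split; [|apply frac_mul; apply odd_nz; eauto]; par. Qed.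
Lemma E_mul a b : Er a -> Ir b -> Er (a*b).
Proof. unfold Ir, Er; intros; cls. do 2 eexists. split; [|split]; [| |apply frac_mul; apply odd_nz; eauto]; par. Qed.
Lemma E_mul' a b : Ir a -> Er b -> Er (a*b).
Proof. intros. rewrite Rmult_comm. apply E_mul; auto. Qed.
Lemma UE_add a b : Ur a -> Er b -> Ur (a+b).
Proof. unfold Ur, Er; intros; cls. do 2 eexists. split; [|split]; [| |apply frac_add; apply odd_nz; eauto]; par. Qed.
Lemma EU_add a b : Er a -> Ur b -> Ur (a+b).
Proof. intros. rewrite Rplus_comm. apply UE_add; auto. Qed.
Lemma EE_add a b : Er a -> Er b -> Er (a+b).
Proof. unfold Er; intros; cls. do 2 eexists. split; [|split]; [| |apply frac_add; apply odd_nz; eauto]; par. Qed.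
Lemma I_add a b : Ir a -> Ir b -> Ir (a+b).
Proof. unfold Ir; intros; cls. do 2 eexists. split; [|apply frac_add; apply odd_nz; eauto]; par. Qed.
Lemma U_opp a : Ur a -> Ur (-a).
Proof. unfold Ur; intros; cls. do 2 eexists. split; [|split]; [| |apply frac_opp; apply odd_nz; eauto]; par. Qed.
Lemma E_opp a : Er a -> Er (-a).
Proof. unfold Er; intros; cls. do 2 eexists. split; [|split]; [| |apply frac_opp; apply odd_nz; eauto]; par. Qed.
Lemma I_opp a : Ir a -> Ir (-a).
Proof. unfold Ir; intros; cls. do 2 eexists. split; [|apply frac_opp; apply odd_nz; eauto]; par. Qed.
Lemma U_inv a : Ur a -> Ur (/a).
Proof. unfold Ur; intros; cls. do 2 eexists. split; [|split]; [| |apply frac_inv; apply odd_nz; eauto]; eauto. Qed.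
Lemma U_I a : Ur a -> Ir a.
Proof. unfold Ur, Ir; intros; cls. eauto. Qed.
Lemma E_I a : Er a -> Ir a.
Proof. unfold Er, Ir; intros; cls. eauto. Qed.
Lemma U_nz a : Ur a -> a <> 0.
Proof. unfold Ur; intros; cls. unfold frac. apply Rmult_integral_contrapositive_currified.
  apply odd_nz; auto. apply Rinv_neq_0_compat. apply odd_nz; auto. Qed.
Lemma U_div a b : Ur a -> Ur b -> Ur (a/b).
Proof. intros. apply U_mul; auto. apply U_inv; auto. Qed.
Lemma U_sub_E a b : Ur a -> Er b -> Ur (a - b).
Proof. intros. apply UE_add; auto. apply E_opp; auto. Qed.
Lemma E_sub_U a b : Er a -> Ur b -> Ur (a - b).
Proof. intros. apply EU_add; auto. apply U_opp; auto. Qed.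
Lemma U_pow a n : Ur a -> Ur (a^n).
Proof. intros. induction n; simpl. exists 1%Z, 1%Z. split; [|split]; auto. unfold frac; simpl; field.
  apply U_mul; auto. Qed.
Lemma E_pow a n : Er a -> Er (a^(S n)).
Proof. intros. induction n. simpl. rewrite Rmult_1_r. auto.
  change (a ^ S (S n)) with (a * a ^ (S n)). apply E_mul; auto. apply E_I; auto. Qed.
Lemma U_c (z : Z) : Z.odd z = true -> Ur (IZR z).
Proof. intros. exists z, 1%Z. split; [|split]; auto. unfold frac; simpl; field. Qed.
Lemma E_c (z : Z) : Z.odd z = false -> Er (IZR z).
Proof. intros. exists z, 1%Z. split; [|split]; auto. unfold frac; simpl; field. Qed.
Lemma rat_IZR z : is_rational (IZR z).
Proof. exists (inject_Z z). unfold Q2R, inject_Z; simpl. field. Qed.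
Lemma rat_plus a b : is_rational a -> is_rational b -> is_rational (a+b).
Proof. intros [x Hx] [y Hy]. exists (x+y)%Q. rewrite Q2R_plus; subst; auto. Qed.
Lemma rat_mult a b : is_rational a -> is_rational b -> is_rational (a*b).
Proof. intros [x Hx] [y Hy]. exists (x*y)%Q. rewrite Q2R_mult; subst; auto. Qed.
Lemma rat_opp a : is_rational a -> is_rational (-a).
Proof. intros [x Hx]. exists (-x)%Q. rewrite Q2R_opp; subst; auto. Qed.
Lemma rat_minus a b : is_rational a -> is_rational b -> is_rational (a-b).
Proof. intros. apply rat_plus; auto. apply rat_opp; auto. Qed.
Lemma rat_inv a : a <> 0 -> is_rational a -> is_rational (/a).
Proof. intros Ha [x Hx]. exists (/x)%Q. subst a. rewrite Q2R_inv; auto.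
  intro Hq. apply Ha. rewrite (Qeq_eqR _ _ Hq). unfold Q2R; simpl; field. Qed.
Lemma rat_div a b : b <> 0 -> is_rational a -> is_rational b -> is_rational (a/b).
Proof. intros. apply rat_mult; auto. apply rat_inv; auto. Qed.
Lemma rat_pow a n : is_rational a -> is_rational (a^n).
Proof. intros. induction n; simpl. apply (rat_IZR 1). apply rat_mult; auto. Qed.
Lemma rat_I a : Ir a -> is_rational a.
Proof. unfold Ir; intros; cls. unfold frac. apply rat_div. apply odd_nz; auto.
  apply rat_IZR. apply rat_IZR. Qed.
Lemma rat_sqrt e r : is_rational r -> e = r^2 -> is_rational (sqrt e).
Proof. intros Hr ->. replace (r^2) with (Rsqr r) by (unfold Rsqr; ring).
  rewrite sqrt_Rsqr_abs. unfold Rabs; destruct Rcase_abs; auto. apply rat_opp; auto. Qed.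

Lemma pow2_U_contra d u u' : Ur u -> Ur u' -> u * 2^(S d) = u' -> False.
Proof. unfold Ur; intros; cls.
  rewrite <- (Rmult_1_r 2), <- (Rmult_1_l 2) in H1. replace (1*2*1) with (IZR 2) in H1 by (simpl; ring).
  rewrite pow_IZR in H1. set (z := (2 ^ Z.of_nat (S d))%Z) in *.
  assert (Hz : Z.odd z = false). { unfold z. rewrite Z.odd_pow; [reflexivity| lia]. }
  assert (E : IZR (x1 * z * x0) = IZR (x * x2)).
  { rewrite !mult_IZR. unfold frac in H1.
    pose proof (odd_nz _ H4). pose proof (odd_nz _ H2).
    replace (IZR x1 * IZR z * IZR x0) with ((IZR x1 / IZR x2 * IZR z) * (IZR x2 * IZR x0)) by (field; auto).
    rewrite H1. field; auto. }
  apply eq_IZR in E. apply (f_equal Z.odd) in E. rewrite !Z.odd_mul, Hz, H, H0, H4 in E.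
  simpl in E. discriminate. Qed.

Lemma lvl_inj n m u u' : Ur u -> Ur u' -> u / 2^n = u' / 2^m -> n = m.
Proof. intros Hu Hu' E.
  assert (P : forall k, 2^k <> 0) by (intro; apply pow_nonzero; lra).
  destruct (Nat.lt_total n m) as [H|[H|H]]; auto; exfalso.
  - destruct (Nat.le_exists_sub (S n) m) as [d [Hd _]]; [lia|].
    replace m with (n + S d)%nat in E by lia. rewrite pow_add in E.
    apply (pow2_U_contra d u u'); auto.
    replace u with (u / 2^n * 2^n) by (field; auto). rewrite E. field. split; auto.
  - destruct (Nat.le_exists_sub (S m) n) as [d [Hd _]]; [lia|].
    replace n with (m + S d)%nat in E by lia. rewrite pow_add in E.
    apply (pow2_U_contra d u' u); auto.
    replace u' with (u' / 2^m * 2^m) by (field; auto). rewrite <- E. field. split; auto.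
Qed.
Definition Cv a u w t := w^2 = u^3 + (a^2+2)*u^2*t^2 + u*t^4.
Definition vv a u w t := (w - a*u*t)/(t^2+u).
Definition vv' a u w t := -(a*u*t + w)/(t^2+u).
Definition xx a u w t := (t / vv a u w t - vv a u w t / t)/2.
Definition stepu (u w t : R) := (u^2 - t^4)^2/w^2.
Definition stepw a u w t :=
  ((3*u^2 + 2*(a^2+2)*u*t^2 + t^4)*(4*u - stepu u w t) - 8*w^2)/w.

Lemma dbl_curve a u w t : w <> 0 -> Cv a u w t -> Cv a (stepu u w t) (stepw a u w t) (2*t).
Proof. unfold Cv, stepw, stepu. intros Hw H.
  assert (Hw2 : w^2 <> 0) by (apply pow_nonzero; auto).
  match goal with |- (?N / w)^2 = _ => replace ((N/w)^2) with (N^2/w^2) by (field; auto) end.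
  rewrite H in *. field. auto. Qed.

Lemma sum_id a t u v v' : t <> 0 -> u <> 0 -> v <> 0 -> v' <> 0 -> t^2+u <> 0 ->
  v*v' = -u -> v+v' = -2*a*u*t/(t^2+u) -> (t/v - v/t)/2 + (t/v' - v'/t)/2 = a.
Proof. intros. assert (E: (t/v - v/t)/2 + (t/v' - v'/t)/2 = (v+v')*(t^2 - v*v')/(2*t*(v*v'))) by (field; auto).
  rewrite E, H4, H5. field. auto. Qed.

Lemma prod_id a u w t : t^2 + u <> 0 -> Cv a u w t -> vv a u w t * vv' a u w t = -u.
Proof. unfold Cv, vv, vv'. intros Hn H.
  replace ((w - a * u * t) / (t ^ 2 + u) * (- (a * u * t + w) / (t ^ 2 + u))) with
   (-(w^2 - a^2*u^2*t^2)/(t^2+u)^2) by (field; auto).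
  rewrite H. field. auto. Qed.

Lemma sum_id2 a u w t : t^2 + u <> 0 -> vv a u w t + vv' a u w t = -2*a*u*t/(t^2+u).
Proof. unfold vv, vv'. intros. field. auto. Qed.
Lemma U_v a u w t : Ir a -> Ur u -> Ur w -> Er t -> Ur (vv a u w t).
Proof. intros. unfold vv. apply U_div. apply U_sub_E; auto. apply E_mul'; auto. apply I_mul; auto. apply U_I; auto.
  apply EU_add; auto. apply (E_pow t 1); auto. Qed.
Lemma U_v' a u w t : Ir a -> Ur u -> Ur w -> Er t -> Ur (vv' a u w t).
Proof. intros. unfold vv'. apply U_div. apply U_opp. apply EU_add; auto. apply E_mul'; auto. apply I_mul; auto. apply U_I; auto.
  apply EU_add; auto. apply (E_pow t 1); auto. Qed.
Lemma rat_U a : Ur a -> is_rational a.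
Proof. intros; apply rat_I, U_I; auto. Qed.
Lemma rat_E a : Er a -> is_rational a.
Proof. intros; apply rat_I, E_I; auto. Qed.

Lemma good_of a aq u w t : Q2R aq = a -> Ir a -> Ur u -> Ur w -> Er t -> t <> 0 -> Cv a u w t ->
  good_point aq (xx a u w t, 0).
Proof. intros Ha HI Hu Hw Ht Ht0 HC.
  pose proof (U_v a u w t HI Hu Hw Ht) as Hv. pose proof (U_v' a u w t HI Hu Hw Ht) as Hv'.
  assert (Hn : t^2 + u <> 0). { apply U_nz. apply EU_add; auto. apply (E_pow t 1); auto. }
  pose proof (U_nz _ Hv). pose proof (U_nz _ Hv'). pose proof (U_nz _ Hu).
  assert (Hx : xx a u w t = a - (t / vv' a u w t - vv' a u w t / t)/2).
  { pose proof (sum_id a t u (vv a u w t) (vv' a u w t)) as S.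
    unfold xx. set (v := vv a u w t) in *. set (v' := vv' a u w t) in *. rewrite <- S; auto. ring. apply prod_id; auto. apply sum_id2; auto. }
  pose proof (rat_U _ Hv) as Rv. pose proof (rat_U _ Hv') as Rv'. pose proof (rat_E _ Ht) as Rt.
  pose proof (rat_IZR 2) as R2.
  assert (Rx : is_rational (xx a u w t)).
  { unfold xx. apply rat_div. lra. apply rat_minus; apply rat_div; auto. auto. }
  unfold good_point, eucl_dist, P1, P2, P3, P4; simpl fst; simpl snd. rewrite Ha.
  split; [auto|split; [apply (rat_IZR 0)|]].
  split; [apply rat_sqrt with (r := xx a u w t); auto; ring|].
  split; [apply rat_sqrt with (r := (t / vv a u w t + vv a u w t / t)/2)|].
  { apply rat_div. lra. apply rat_plus; apply rat_div; auto. auto. }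
  { unfold xx. field. auto. }
  split; [apply rat_sqrt with (r := xx a u w t - a); [|ring]|].
  { apply rat_minus; auto. apply rat_I; auto. }
  apply rat_sqrt with (r := (t / vv' a u w t + vv' a u w t / t)/2).
  { apply rat_div. lra. apply rat_plus; apply rat_div; auto. auto. }
  rewrite Hx. field. auto.
Qed.

Lemma I_pow a n : Ir a -> Ir (a^n).
Proof. intros. induction n; simpl. apply U_I. apply U_c; reflexivity. apply I_mul; auto. Qed.

Lemma step_inv a u w t : Ir a -> Ur u -> Ur w -> Er t -> Cv a u w t ->
  Ur (stepu u w t) /\ Ur (stepw a u w t) /\ Cv a (stepu u w t) (stepw a u w t) (2*t).
Proof. intros HI Hu Hw Ht HC.
  assert (Hsu : Ur (stepu u w t)).
  { unfold stepu. apply U_div; apply U_pow; auto. apply U_sub_E. apply U_pow; auto. apply (E_pow t 3); auto. }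
  split; [auto|split; [|apply dbl_curve; auto; apply U_nz; auto]].
  unfold stepw. apply U_div; auto. apply U_sub_E.
  - apply U_mul.
    + apply UE_add. apply UE_add.
      * apply (U_mul 3). apply U_c; reflexivity. apply U_pow; auto.
      * apply E_mul'. apply I_mul. apply I_mul. apply E_I, E_c; reflexivity.
        apply I_add. apply I_pow; auto. apply E_I, E_c; reflexivity. apply U_I; auto.
        apply (E_pow t 1); auto.
      * apply (E_pow t 3); auto.
    + apply E_sub_U; auto. apply E_mul. apply E_c; reflexivity. apply U_I; auto.
  - apply E_mul. apply E_c; reflexivity. apply U_I, U_pow; auto.
Qed.
Fixpoint st a u0 w0 (k : nat) : R * R :=
  match k with
  | O => (u0, w0)
  | S k => (stepu (fst (st a u0 w0 k)) (snd (st a u0 w0 k)) (2^(k+1)),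
            stepw a (fst (st a u0 w0 k)) (snd (st a u0 w0 k)) (2^(k+1)))
  end.

Lemma E_t k : Er (2^(k+1)).
Proof. rewrite Nat.add_1_r. apply E_pow. apply E_c; reflexivity. Qed.

Lemma st_inv a u0 w0 : Ir a -> Ur u0 -> Ur w0 -> Cv a u0 w0 2 -> forall k,
  Ur (fst (st a u0 w0 k)) /\ Ur (snd (st a u0 w0 k)) /\ Cv a (fst (st a u0 w0 k)) (snd (st a u0 w0 k)) (2^(k+1)).
Proof. intros HI Hu Hw HC k. induction k as [|k [H1 [H2 H3]]].
  - simpl. replace (2 * 1) with 2 by ring. auto.
  - cbn [st fst snd]. replace (2^(S k + 1)) with (2 * 2^(k+1)) by (simpl; ring).
    apply step_inv; auto. apply E_t.
Qed.

Definition pt a u0 w0 k := (xx a (fst (st a u0 w0 k)) (snd (st a u0 w0 k)) (2^(k+1)), 0).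

Lemma xx_lvl a u w k : Ir a -> Ur u -> Ur w -> exists e, Ur e /\ xx a u w (2^(k+1)) = e / 2^(k+2).
Proof. intros HI Hu Hw. set (t := 2^(k+1)). pose proof (E_t k) as Ht. fold t in Ht.
  pose proof (U_v a u w t HI Hu Hw Ht) as Hv.
  exists ((t^2 - (vv a u w t)^2)/vv a u w t). split.
  - apply U_div; auto. apply E_sub_U. apply (E_pow t 1); auto. apply U_pow; auto.
  - replace (2^(k+2)) with (2*t) by (unfold t; rewrite !Nat.add_succ_r; simpl; ring).
    assert (t <> 0) by (unfold t; apply pow_nonzero; lra).
    pose proof (U_nz _ Hv). unfold xx. field. auto.
Qed.

Lemma pt_inj a u0 w0 : Ir a -> Ur u0 -> Ur w0 -> Cv a u0 w0 2 -> forall k j, pt a u0 w0 k = pt a u0 w0 j -> k = j.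
Proof. intros HI Hu Hw HC k j E. unfold pt in E. injection E as E.
  destruct (st_inv a u0 w0 HI Hu Hw HC k) as [A1 [A2 _]].
  destruct (st_inv a u0 w0 HI Hu Hw HC j) as [B1 [B2 _]].
  destruct (xx_lvl a _ _ k HI A1 A2) as [e1 [He1 E1]].
  destruct (xx_lvl a _ _ j HI B1 B2) as [e2 [He2 E2]].
  rewrite E1, E2 in E. apply lvl_inj in E; auto. lia.
Qed.

Lemma inf_gen (f : nat -> R*R) (Pr : R*R -> Prop) : (forall k, Pr (f k)) ->
  (forall k j, f k = f j -> k = j) -> infinite_set Pr.
Proof. intros HS Hi.
  assert (G : forall l N, exists k, (N <= k)%nat /\ ~ In (f k) l).
  { induction l as [|x l IH]; intros N.
    - exists N; split; auto.
    - destruct (IH N) as [k1 [Hk1 Hn1]]. destruct (IH (S k1)) as [k2 [Hk2 Hn2]].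
      destruct (Classical_Prop.classic (f k1 = x)) as [E|E].
      + exists k2. split; [lia|]. intros [E2|E2]; auto. subst x. apply Hi in E2. lia.
      + exists k1. split; auto. intros [E2|E2]; auto. }
  intro l. destruct (G l O) as [k [_ Hk]]. exists (f k). auto.
Qed.

Lemma good_a_of a aq u0 w0 : Q2R aq = a -> Ir a -> Ur u0 -> Ur w0 -> Cv a u0 w0 2 -> good_a aq.
Proof. intros Ha HI Hu Hw HC. apply (inf_gen (pt a u0 w0)).
  - intro k. destruct (st_inv a u0 w0 HI Hu Hw HC k) as [A1 [A2 A3]]. unfold pt.
    apply good_of with (a := a); auto. apply E_t. apply pow_nonzero; lra.
  - apply pt_inj; auto.
Qed.
Definition h (s : R) := s + / (3 - 4*s).
Definition hinv (y : R) := (3 + 4*y - sqrt ((4*y-3)^2 + 16))/8.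

Lemma hinv_spec y : hinv y < 3/4 /\ h (hinv y) = y.
Proof. unfold hinv, h. set (D := (4*y-3)^2+16). assert (HD : 0 <= D) by (unfold D; nra).
  set (r := sqrt D). assert (Hr : r*r = D) by (apply sqrt_sqrt; auto).
  assert (Hr0 : 0 <= r) by apply sqrt_pos.
  assert (Hr1 : r > 4*y - 3) by (unfold D in Hr; nra).
  split. lra.
  replace (3 - 4 * ((3 + 4 * y - r) / 8)) with ((3 - 4*y + r)/2) by field.
  assert (0 < 3 - 4*y + r) by (unfold D in Hr; nra).
  apply Rminus_diag_uniq.
  replace ((3 + 4 * y - r) / 8 + / ((3 - 4 * y + r) / 2) - y) with
    ((16 - (r*r - (4*y-3)^2)) / (8 * (3 - 4*y + r))) by (field; lra).
  unfold D in Hr. rewrite Hr. field. lra.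
Qed.

Lemma h_mono s s' : s < s' -> s' < 3/4 -> h s < h s'.
Proof. intros. unfold h.
  assert (0 < 3 - 4*s') by lra. assert (0 < 3 - 4*s) by lra.
  assert (/ (3 - 4*s) < / (3 - 4*s')) by (apply Rinv_lt_contravar; nra).
  lra. Qed.

Lemma dense_I s1 s2 : s1 < s2 -> exists s, Ir s /\ s1 < s < s2.
Proof. intros H.
  destruct (archimed (/ (s2 - s1))) as [A1 A2].
  assert (Hp : 0 < / (s2 - s1)) by (apply Rinv_0_lt_compat; lra).
  set (z0 := up (/ (s2 - s1))) in *.
  set (M := (2*z0 + 1)%Z).
  assert (HM : IZR M = 2 * IZR z0 + 1) by (unfold M; rewrite plus_IZR, mult_IZR; reflexivity).
  assert (HM1 : IZR M * (s2 - s1) > 1).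
  { assert (IZR M > / (s2 - s1)) by lra.
    apply Rmult_gt_compat_r with (r := s2 - s1) in H0; [|lra].
    rewrite Rinv_l in H0; lra. }
  assert (HM0 : IZR M > 0) by lra.
  destruct (archimed (IZR M * s1)) as [B1 B2].
  exists (IZR (up (IZR M * s1)) / IZR M). split.
  - exists (up (IZR M * s1)), M. split; [|reflexivity].
    unfold M. rewrite Z.odd_add, Z.odd_mul. reflexivity.
  - split.
    + apply Rmult_lt_reg_r with (IZR M); auto. unfold Rdiv. rewrite Rmult_assoc, Rinv_l; lra.
    + apply Rmult_lt_reg_r with (IZR M); auto. unfold Rdiv. rewrite Rmult_assoc, Rinv_l; lra.
Qed.

Lemma init_curve s : 3 - 4*s <> 0 ->
  Cv (s + /(3-4*s)) (-(3-4*s)) ((3-4*s)*(4-(3-4*s)) - 2*(s + /(3-4*s))*(3-4*s)) 2.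
Proof. intros. unfold Cv. field. auto. Qed.
Theorem theorem2p1 :
  forall u v : R, u < v -> exists a : Q, good_a a /\ u < Q2R a < v.
Proof.
  intros u v Huv.
  destruct (hinv_spec u) as [Hu1 Hu2]. destruct (hinv_spec v) as [Hv1 Hv2].
  assert (Hs : hinv u < hinv v).
  { destruct (Rlt_or_le (hinv u) (hinv v)) as [H|H]; auto.
    destruct (Rle_lt_or_eq_dec _ _ H) as [H'|H'].
    - pose proof (h_mono _ _ H' Hu1). lra.
    - rewrite H' in Hv2. lra. }
  destruct (dense_I _ _ Hs) as [s [Is [Hs1 Hs2]]].
  set (v1 := 3 - 4*s).
  assert (Uv1 : Ur v1).
  { unfold v1. apply U_sub_E. apply U_c; reflexivity. apply E_mul. apply E_c; reflexivity. auto. }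
  pose proof (U_nz _ Uv1) as Hv1n.
  set (a := s + / v1).
  assert (Ia : Ir a). { unfold a. apply I_add; auto. apply U_I, U_inv; auto. }
  destruct (rat_I _ Ia) as [aq Haq].
  exists aq. split.
  - apply (good_a_of a aq (-v1) (v1*(4-v1) - 2*a*v1)); auto.
    + apply U_opp; auto.
    + apply U_sub_E. apply U_mul; auto. apply E_sub_U; auto. apply E_c; reflexivity.
      apply E_mul; [|apply U_I; auto]. apply E_mul; auto. apply E_c; reflexivity.
    + unfold a, v1. apply init_curve. exact Hv1n.

  - rewrite Haq. unfold a, v1. fold (h s).
    split.
    + rewrite <- Hu2 at 1. apply h_mono; lra.
    + rewrite <- Hv2. apply h_mono; lra.
Qed.
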